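(* Let $L$ be an oriented, ordered, compatible virtual link diagram with affine bilabeling $C$. Then the multi-variable affine index polynomial $p_{(L,C)}$ is a Vassiliev invariant of order one of the pair $(L,C)$. That is: - its extension vanishes on every compatible singular virtual link (with the induced coloring) having two or more double points; and - it does not vanish on every compatible singular virtual link with one double point. As a consequence, the following are also Vassiliev invariants of order one: - the Affine Index Polynomial $P_K(t)$ of virtual knots; and - Kauffman's affine index polynomial $P_L(t)$ of compatible virtual links with a given affine labeling.
   Context: **Diagrams.** A virtual link diagram is an oriented planar diagram of ordered closed curves $L_1,\dots,L_n$ (components) with classical crossings (with over/under information) and virtual crossings, up to classical and virtual Reidemeister moves. **Crossing conventions.** Draw a classical crossing with both strands oriented upward. - The bottom-left-to-top-right strand has index change $-1$; the bottom-right-to-top-left strand has index change $+1$. - The crossing is positive ($\operatorname{sgn}=+1$) if the overstrand is the bottom-left-to-top-right strand, and negative otherwise. - Self-crossings have both strands on one component; external crossings have strands on different components. - $L$ is compatible if, for each $i$, the sum of index changes of $L_i$ over its passages through external classical crossings is $0$. **Affine bilabeling $C$.** - Each component $L_i$ gets a starting point with bilabel $(a^{(i)}_1,a^{(i)}_2)$ of formal integer variables, distinct for different components. - The bilabel is carried along $L_i$ in its orientation and is unchanged at virtual crossings. - On passing a classical crossing with index change $\varepsilon$, the first entry changes by $\varepsilon$ at a self-crossing, and the second entry changes by $\varepsilon$ at an external crossing. **Weights and polynomial.** Let $|(x,y)|=x+y$. With both strands drawn upward: - if $c$ is positive, $W(c)=|\text{bottom-left}|-|\text{top-left}|$; - if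 $c$ is negative, $W(c)=|\text{bottom-right}|-|\text{top-right}|$. Then $p_{(L,C)}(t_1,\dots,t_n)=\sum_c\operatorname{sgn}(c)(t_{o(c)}^{W(c)}-1)$, summed over classical crossings, where $o(c)$ is the component of the overstrand. **Kauffman's polynomial.** - A single label per component is propagated by adding the index change at every classical crossing. - Weights are the same differences of single labels. - $P_L(t)=\sum_c\operatorname{sgn}(c)(t^{W(c)}-1)$. - For a virtual knot this is the Affine Index Polynomial $P_K(t)$. **Vassiliev invariants.** - A singular virtual link also has finitely many double points. - An invariant $V$ is extended to singular links by $V(L_\times)=V(L_+)-V(L_-)$, where $L_\pm$ replace a double point by a positive/negative classical crossing; this is applied iteratively. - Colorings of singular links are obtained by treating double points as crossings for label propagation. Label propagation does not depend on crossing sign, so all resolutions inherit the same labels. - $V$ has order $\le m$ if its extension vanishes on all singular links with more than $m$ double points. - Order one means order $\le 1$ but not order $\le 0$. *)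

(* Defs.v *)
From HB Require Import structures.
From mathcomp Require Import all_boot all_algebra.
Set Implicit Arguments. Unset Strict Implicit. Unset Printing Implicit Defensive.
Import GRing.Theory Num.Theory.
Local Open Scope ring_scope.

(* A diagram with n components and m crossings (classical crossings or double
   points) is given by, for each component i : 'I_n, the sequence [w i] of its
   passages through crossings, read in the orientation from its starting
   point.  A passage is a pair (c, s) : 'I_m * bool:  drawing crossing c with
   both strands upward, s = true means the passage is the
   bottom-left-to-top-right strand (index change -1) and s = false the
   bottom-right-to-top-left strand (index change +1).  Virtual crossings do not
   appear (they do not affect anything below). *)

Definition wf_words (n m : nat) (w : 'I_n -> seq ('I_m * bool)) : bool :=
  perm_eq (flatten [seq w i | i <- enum 'I_n]) (enum {: 'I_m * bool}).

Definition comp (n m : nat) (w : 'I_n -> seq ('I_m * bool)) (x : 'I_m * bool)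
  : option 'I_n := [pick i | x \in w i].

Definition selfc (n m : nat) (w : 'I_n -> seq ('I_m * bool)) (c : 'I_m) : bool :=
  comp w (c, true) == comp w (c, false).

Definition eps (m : nat) (x : 'I_m * bool) : int := if x.2 then -1 else 1.

Definition compatible (n m : nat) (w : 'I_n -> seq ('I_m * bool)) : Prop :=
  forall i : 'I_n, \sum_(x <- w i | ~~ selfc w x.1) eps x = 0.

Definition addb (a b : int * int) : int * int := (a.1 + b.1, a.2 + b.2)%R.
Definition bnorm (a : int * int) : int := (a.1 + a.2)%R.

Definition delta (n m : nat) (w : 'I_n -> seq ('I_m * bool)) (x : 'I_m * bool)
  : int * int := if selfc w x.1 then (eps x, 0%R) else (0%R, eps x).

(* bilabel on component i just before its k-th passage; st i = starting bilabel *)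
Definition bilabel (n m : nat) (w : 'I_n -> seq ('I_m * bool))
  (st : 'I_n -> int * int) (i : 'I_n) (k : nat) : int * int :=
  foldl (fun a x => addb a (delta w x)) (st i) (take k (w i)).

Definition lab_in (n m : nat) (w : 'I_n -> seq ('I_m * bool))
  (st : 'I_n -> int * int) (x : 'I_m * bool) : int * int :=
  if comp w x is Some i then bilabel w st i (index x (w i)) else (0%R, 0%R).

Definition lab_out (n m : nat) (w : 'I_n -> seq ('I_m * bool))
  (st : 'I_n -> int * int) (x : 'I_m * bool) : int * int :=
  if comp w x is Some i then bilabel w st i (index x (w i)).+1 else (0%R, 0%R).

(* weight of crossing c of sign b (true = positive):
   positive: |bottom-left| - |top-left| ; negative: |bottom-right| - |top-right| *)
Definition weight (n m : nat) (w : 'I_n -> seq ('I_m * bool))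
  (st : 'I_n -> int * int) (b : bool) (c : 'I_m) : int :=
  if b then (bnorm (lab_in w st (c, true)) - bnorm (lab_out w st (c, false)))%R
  else (bnorm (lab_in w st (c, false)) - bnorm (lab_out w st (c, true)))%R.

Definition sgnz (b : bool) : int := if b then 1%R else (-1)%R.

(* exponent vector of the Laurent monomial t_o^W *)
Definition monoL (n : nat) (o : option 'I_n) (W : int) : {ffun 'I_n -> int} :=
  [ffun j => if o == Some j then W else 0%R].

(* A Laurent polynomial in t_1..t_n is represented by its coefficient
   function on exponent vectors.  For a classical diagram with sign function
   sg (true = positive), the overstrand of c is the passage (c, sg c). *)
Definition p_coef (n m : nat) (w : 'I_n -> seq ('I_m * bool)) (sg : 'I_m -> bool)
  (st : 'I_n -> int * int) (e : {ffun 'I_n -> int}) : int :=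
  (\sum_(c < m) sgnz (sg c) *
     (((e == monoL (comp w (c, sg c)) (weight w st (sg c) c)) : nat)%:Z
      - ((e == [ffun => 0%R]) : nat)%:Z))%R.

Definition label1 (n m : nat) (w : 'I_n -> seq ('I_m * bool))
  (st1 : 'I_n -> int) (i : 'I_n) (k : nat) : int :=
  (st1 i + \sum_(x <- take k (w i)) eps x)%R.

Definition lab1_in (n m : nat) (w : 'I_n -> seq ('I_m * bool))
  (st1 : 'I_n -> int) (x : 'I_m * bool) : int :=
  if comp w x is Some i then label1 w st1 i (index x (w i)) else 0%R.

Definition lab1_out (n m : nat) (w : 'I_n -> seq ('I_m * bool))
  (st1 : 'I_n -> int) (x : 'I_m * bool) : int :=
  if comp w x is Some i then label1 w st1 i (index x (w i)).+1 else 0%R.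

Definition weight1 (n m : nat) (w : 'I_n -> seq ('I_m * bool))
  (st1 : 'I_n -> int) (b : bool) (c : 'I_m) : int :=
  if b then (lab1_in w st1 (c, true) - lab1_out w st1 (c, false))%R
  else (lab1_in w st1 (c, false) - lab1_out w st1 (c, true))%R.

(* coefficient of t^e in P_L(t) = sum_c sgn(c) (t^{W(c)} - 1) *)
Definition PL_coef (n m : nat) (w : 'I_n -> seq ('I_m * bool)) (sg : 'I_m -> bool)
  (st1 : 'I_n -> int) (e : int) : int :=
  (\sum_(c < m) sgnz (sg c) *
     (((e == weight1 w st1 (sg c) c) : nat)%:Z - ((e == 0%R) : nat)%:Z))%R.

(* kd c = Some true: positive classical crossing; Some false: negative;
   None: double point. *)
Definition ndouble (m : nat) (kd : 'I_m -> option bool) : nat :=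
  #|[pred c | kd c == None]|.

Definition resolve (m : nat) (kd : 'I_m -> option bool) (s : 'I_m -> bool)
  : 'I_m -> bool := fun c => if kd c is Some b then b else s c.

(* V(L_x) = V(L_+) - V(L_-) iterated over all double points, i.e. the signed
   sum over all resolutions of the double points. *)
Definition vext (m : nat) (V : ('I_m -> bool) -> int) (kd : 'I_m -> option bool)
  : int :=
  (\sum_(s : {ffun 'I_m -> bool} | [forall c, (kd c != None) ==> s c])
     (-1) ^+ #|[pred c | (kd c == None) && ~~ s c]| * V (resolve kd s))%R.

(* Main.v *)
Require Import Defs.
From mathcomp Require Import all_boot all_algebra.
From mathcomp Require Import zify.
Set Implicit Arguments. Unset Strict Implicit. Unset Printing Implicit Defensive.
Import GRing.Theory Num.Theory.
Local Open Scope ring_scope.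


Definition sgn1 (b : bool) : int := if b then 1 else -1.

Lemma sign_prod m (P : pred 'I_m) (s : 'I_m -> bool) :
  (-1) ^+ #|[pred c | P c && ~~ s c]| = \prod_(c | P c) sgn1 (s c) :> int.
Proof.
rewrite -prodr_const big_mkcond [RHS]big_mkcond /=.
apply: eq_bigr => c _; rewrite !inE; by case: (P c); case: (s c).
Qed.

Definition flipf m (d : 'I_m) (s : {ffun 'I_m -> bool}) : {ffun 'I_m -> bool} :=
  [ffun c => if c == d then ~~ s c else s c].

Lemma flipfK m (d : 'I_m) : involutive (flipf d).
Proof. move=> s; apply/ffunP => c; rewrite !ffunE; case: eqP => _ //; exact: negbK. Qed.

Lemma flip_sum m (kd : 'I_m -> option bool) d (F : {ffun 'I_m -> bool} -> int) :
  kd d = None -> (forall s, F (flipf d s) = F s) ->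
  (\sum_(s : {ffun 'I_m -> bool} | [forall c, (kd c != None) ==> s c])
     (-1) ^+ #|[pred c | (kd c == None) && ~~ s c]| * F s) = 0.
Proof.
move=> Hd HF.
set S := (\sum_(s | _) _).
have HS : S = - S.
  rewrite {1}/S (reindex_inj (inv_inj (flipfK d))) /=.
  rewrite -sumrN; apply: eq_big => s.
    apply: eq_forallb => c; rewrite ffunE; case: (c =P d) => [Hcd|//]; by rewrite Hcd Hd.
  move=> _; rewrite HF !sign_prod (bigD1 d) ?Hd //= [in RHS](bigD1 d) ?Hd //=.
  rewrite ffunE eqxx.
  have -> : \prod_(i | (kd i == None) && (i != d)) sgn1 (flipf d s i)
          = \prod_(i | (kd i == None) && (i != d)) sgn1 (s i).
    apply: eq_bigr => c /andP[_ /negbTE Hc]; by rewrite ffunE Hc.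
  by case: (s d); rewrite /= ?mulN1r ?mul1r ?mulNr ?opprK.
lia.
Qed.


Lemma vext_add0 m (V : ('I_m -> bool) -> int) (g : 'I_m -> bool -> int) kd :
  (forall sg, V sg = \sum_(c < m) g c (sg c)) -> (2 <= ndouble kd)%N -> vext V kd = 0.
Proof.
move=> HV H2; rewrite /vext.
under eq_bigr do rewrite HV mulr_sumr.
rewrite exchange_big /=; apply: big1 => c _.
have [d [Hd Hdc]] : exists d, kd d = None /\ d != c.
  move: H2; rewrite /ndouble => /card_gt1P [x [y [Hx Hy Hxy]]].
  move: Hx Hy; rewrite !inE => /eqP Hx /eqP Hy.
  case: (x =P c) => [Exc|/eqP Nxc]; last by exists x.
  exists y; split => //; apply: contra Hxy => /eqP ->; by rewrite Exc.
apply: (flip_sum (d := d) (F := fun s => g c (resolve kd s c))) => // s.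
by rewrite /resolve ffunE eq_sym (negbTE Hdc).
Qed.

Lemma vext_one m (V : ('I_m -> bool) -> int) kd d :
  (forall c, (kd c == None) = (c == d)) ->
  vext V kd = V (resolve kd [ffun => true]) - V (resolve kd [ffun c => c != d]).
Proof.
move=> Hk; rewrite /vext.
have P1 : [forall c, (kd c != None) ==> [ffun => true] c].
  by apply/forallP => c; rewrite ffunE implybT.
have P2 : [forall c, (kd c != None) ==> [ffun c => c != d] c].
  by apply/forallP => c; rewrite ffunE Hk implybb.
have N12 : [ffun c => c != d] != [ffun => true] :> {ffun 'I_m -> bool}.
  by apply/eqP => /ffunP /(_ d); rewrite !ffunE eqxx.
rewrite (bigD1 _ P1) (bigD1 [ffun c => c != d]) /=; last by rewrite P2 N12.
rewrite big1 ?addr0; last first.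
  move=> s /andP [/andP [/forallP Hs H1] H2]; exfalso.
  case Hsd: (s d).
    move/eqP: H1; apply; apply/ffunP => c; rewrite ffunE.
    case: (c =P d) => [->//|/eqP Hcd]; move: (Hs c); by rewrite Hk Hcd.
  move/eqP: H2; apply; apply/ffunP => c; rewrite ffunE.
  case: (c =P d) => [->|/eqP Hcd]; first by rewrite Hsd.
  move: (Hs c); by rewrite Hk Hcd.
rewrite !sign_prod !(big_pred1 d) // !ffunE eqxx /=.
by rewrite mul1r mulN1r.
Qed.

Lemma vext_one_add m (V : ('I_m -> bool) -> int) (g : 'I_m -> bool -> int) kd d :
  (forall sg, V sg = \sum_(c < m) g c (sg c)) ->
  (forall c, (kd c == None) = (c == d)) ->
  vext V kd = g d true - g d false.
Proof.
move=> HV Hk; rewrite (vext_one V Hk) !HV -sumrB (bigD1 d) //= big1 ?addr0.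
  have Hd : kd d = None by apply/eqP; rewrite Hk.
  by rewrite /resolve Hd !ffunE eqxx.
move=> c Hcd; rewrite /resolve; case Hc: (kd c) => [b|]; first by rewrite subrr.
by move: (Hk c); rewrite Hc eqxx (negbTE Hcd).
Qed.


Definition c0 : 'I_2 := ord0.
Definition c1 : 'I_2 := @Ordinal 2 1 isT.
Definition word : seq ('I_2 * bool) := [:: (c0, true); (c1, true); (c0, false); (c1, false)].
Definition wex (n' : nat) (i : 'I_n'.+1) : seq ('I_2 * bool) := if i == ord0 then word else [::].
Definition kex (c : 'I_2) : option bool := if c == c0 then None else Some true.

Lemma in_word (x : 'I_2 * bool) : x \in word.
Proof. by case: x => [[[|[|k]] Hk] []]. Qed.

Lemma wex0 n' : wex (ord0 : 'I_n'.+1) = word.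
Proof. by rewrite /wex eqxx. Qed.

Lemma compE n' x : Defs.comp (@wex n') x = Some ord0.
Proof.
rewrite /Defs.comp; case: pickP => [i Hi|H]; last by move: (H ord0); rewrite wex0 in_word.
congr Some; move: Hi; rewrite /wex; by case: (i =P ord0).
Qed.

Lemma selfcE n' c : selfc (@wex n') c.
Proof. by rewrite /selfc !compE. Qed.

Lemma deltaE n' x : delta (@wex n') x = (eps x, 0).
Proof. by rewrite /delta selfcE. Qed.

Lemma wf_wex n' : wf_words (@wex n').
Proof.
rewrite /wf_words enum_ordSl /=.
have -> : flatten [seq wex i | i <- [seq lift ord0 i | i <- enum 'I_n']] = [::].
  elim: (enum 'I_n') => //= i s ->; by rewrite /wex.
apply: uniq_perm; [by [] | exact: enum_uniq | ].
move=> x; by rewrite mem_enum in_word.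
Qed.

Lemma compat_wex n' : compatible (@wex n').
Proof. move=> i; apply: big1 => x; by rewrite selfcE. Qed.

Lemma kexE c : (kex c == None) = (c == c0).
Proof. rewrite /kex; by case: (c == c0). Qed.

Lemma ndouble_kex : ndouble kex = 1%N.
Proof. apply: eq_card1 => c; by rewrite !inE kexE. Qed.

Definition st0 (n' : nat) (i : 'I_n'.+1) : int * int := (0, 0).
Definition st10 (n' : nat) (i : 'I_n'.+1) : int := 0.

Lemma weightT n' : weight (@wex n') (@st0 n') true c0 = 1.
Proof.
rewrite /weight /lab_in /lab_out !compE /bilabel wex0 /=.
by rewrite !deltaE.
Qed.

Lemma weightF n' : weight (@wex n') (@st0 n') false c0 = -1.
Proof.
rewrite /weight /lab_in /lab_out !compE /bilabel wex0 /=.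
by rewrite !deltaE.
Qed.

Lemma weight1T n' : weight1 (@wex n') (@st10 n') true c0 = 1.
Proof.
rewrite /weight1 /lab1_in /lab1_out !compE /label1 wex0 /=.
by rewrite !big_cons !big_nil.
Qed.

Lemma weight1F n' : weight1 (@wex n') (@st10 n') false c0 = -1.
Proof.
rewrite /weight1 /lab1_in /lab1_out !compE /label1 wex0 /=.
by rewrite !big_cons !big_nil.
Qed.

Lemma ex_p n' :
  vext (fun sg => p_coef (@wex n') sg (@st0 n') (monoL (Some ord0) 1)) kex <> 0.
Proof.
rewrite (vext_one_add (g := fun c b => sgnz b *
     (((monoL (Some ord0) 1 == monoL (Defs.comp (@wex n') (c, b)) (weight (@wex n') (@st0 n') b c)) : nat)%:Z
      - ((monoL (Some (ord0 : 'I_n'.+1)) 1 == [ffun => 0%R]) : nat)%:Z)) (d := c0)) //; last exact: kexE.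
rewrite !compE weightT weightF eqxx.
have -> : (monoL (Some (ord0 : 'I_n'.+1)) 1 == monoL (Some ord0) (-1)) = false.
  by apply/eqP => /ffunP /(_ ord0); rewrite !ffunE eqxx.
have -> : (monoL (Some (ord0 : 'I_n'.+1)) 1 == [ffun => 0]) = false.
  by apply/eqP => /ffunP /(_ ord0); rewrite !ffunE eqxx.
by [].
Qed.

Lemma ex_PL n' :
  vext (fun sg => PL_coef (@wex n') sg (@st10 n') 1) kex <> 0.
Proof.
rewrite (vext_one_add (g := fun c b => sgnz b *
     (((1 == weight1 (@wex n') (@st10 n') b c) : nat)%:Z - ((1 == 0 :> int) : nat)%:Z)) (d := c0)) //; last exact: kexE.
by rewrite weight1T weight1F.
Qed.

Local Close Scope ring_scope.
Theorem proposition5 :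
  (* multi-variable affine index polynomial p_(L,C): order <= 1 *)
  (forall (n m : nat) (w : 'I_n -> seq ('I_m * bool)) (kd : 'I_m -> option bool)
          (st : 'I_n -> int * int),
      wf_words w -> compatible w -> 2 <= ndouble kd ->
      forall e : {ffun 'I_n -> int}, vext (fun sg => p_coef w sg st e) kd = 0%R)
  /\
  (* ... and not order <= 0 *)
  (forall n : nat, 0 < n ->
     exists (m : nat) (w : 'I_n -> seq ('I_m * bool)) (kd : 'I_m -> option bool)
            (st : 'I_n -> int * int) (e : {ffun 'I_n -> int}),
       [/\ wf_words w, compatible w, ndouble kd = 1
         & vext (fun sg => p_coef w sg st e) kd <> 0%R])
  /\
  (* Affine Index Polynomial P_K of virtual knots (n = 1): order <= 1 *)
  (forall (m : nat) (w : 'I_1 -> seq ('I_m * bool)) (kd : 'I_m -> option bool)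
          (st1 : 'I_1 -> int),
      wf_words w -> 2 <= ndouble kd ->
      forall e : int, vext (fun sg => PL_coef w sg st1 e) kd = 0%R)
  /\
  (* ... and not order <= 0 *)
  (exists (m : nat) (w : 'I_1 -> seq ('I_m * bool)) (kd : 'I_m -> option bool)
          (st1 : 'I_1 -> int) (e : int),
      [/\ wf_words w, ndouble kd = 1 & vext (fun sg => PL_coef w sg st1 e) kd <> 0%R])
  /\
  (* Kauffman's P_L of compatible virtual links with an affine labeling: order <= 1 *)
  (forall (n m : nat) (w : 'I_n -> seq ('I_m * bool)) (kd : 'I_m -> option bool)
          (st1 : 'I_n -> int),
      wf_words w -> compatible w -> 2 <= ndouble kd ->
      forall e : int, vext (fun sg => PL_coef w sg st1 e) kd = 0%R)
  /\
  (* ... and not order <= 0 *)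
  (forall n : nat, 0 < n ->
     exists (m : nat) (w : 'I_n -> seq ('I_m * bool)) (kd : 'I_m -> option bool)
            (st1 : 'I_n -> int) (e : int),
       [/\ wf_words w, compatible w, ndouble kd = 1
         & vext (fun sg => PL_coef w sg st1 e) kd <> 0%R]).
Proof.
split.
  move=> n m w kd st _ _ H2 e.
  apply: (vext_add0 (g := fun c b => (sgnz b *
     (((e == monoL (Defs.comp w (c, b)) (weight w st b c)) : nat)%:Z
      - ((e == [ffun => 0%R]) : nat)%:Z))%R)); [by move=> sg | exact: H2].
split.
  case=> [|n'] Hn; first by [].
  exists 2%N, (@wex n'), kex, (@st0 n'), (monoL (Some ord0) 1%R).
  split; [exact: wf_wex | exact: compat_wex | exact: ndouble_kex | exact: ex_p].
split.
  move=> m w kd st1 _ H2 e.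
  apply: (vext_add0 (g := fun c b => (sgnz b *
     (((e == weight1 w st1 b c) : nat)%:Z - ((e == 0%R) : nat)%:Z))%R)); [by move=> sg | exact: H2].
split.
  exists 2%N, (@wex 0), kex, (@st10 0), 1%R.
  split; [exact: wf_wex | exact: ndouble_kex | exact: ex_PL].
split.
  move=> n m w kd st1 _ _ H2 e.
  apply: (vext_add0 (g := fun c b => (sgnz b *
     (((e == weight1 w st1 b c) : nat)%:Z - ((e == 0%R) : nat)%:Z))%R)); [by move=> sg | exact: H2].
case=> [|n'] Hn; first by [].
exists 2%N, (@wex n'), kex, (@st10 n'), 1%R.
split; [exact: wf_wex | exact: compat_wex | exact: ndouble_kex | exact: ex_PL].
Qed.
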